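(* Let $G=(V,E)$ be a finite, simple, connected reflective graph and let $z\in V$. Suppose the subgraph induced on $S_1(z)$ is disconnected. Then $G$ is a cartesian product of two non-trivial graphs.
   Context: $d$ is the combinatorial distance and $S_1(z)=\{v:d(v,z)=1\}$. For adjacent $x\sim y$ let $V_x^y=\{v: d(v,x)<d(v,y)\}$, $V^{xy}=\{v:d(v,x)=d(v,y)\}$. A reflection from $x$ to $y$ is a graph automorphism $\phi$ with $\phi\circ\phi=\mathrm{id}$, $\phi(x)=y$, such that the edges between $V_x^y$ and $V_y^x$ are exactly $\{\{x',\phi(x')\}:x'\in V_x^y\}$ and $\phi$ fixes $V^{xy}$ pointwise. $G$ is reflective if every edge admits a reflection. Cartesian product: $(a,b)\sim(a',b')$ iff ($a=a'$, $b\sim b'$) or ($a\sim a'$, $b=b'$); non-trivial means having at least two vertices. *)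

(* Defs.v *)
From mathcomp Require Import all_boot.

Set Implicit Arguments. Unset Strict Implicit. Unset Printing Implicit Defensive.

Section Graphs.
Variables (T : finType) (e : rel T).

Definition simple_graph := symmetric e /\ irreflexive e.

Definition connected_graph := forall x y : T, connect e x y.

Definition walk_of_len (x y : T) (n : nat) : bool :=
  [exists p : n.-tuple T, path e x p && (last x p == y)].

(* combinatorial distance: least n admitting a walk of length n
   (shortest walks are paths, of length < #|T|); #|T| if unreachable *)
Definition gdist (x y : T) : nat :=
  find (walk_of_len x y) (iota 0 #|T|).

Definition sphere1 (z : T) : {set T} := [set v | gdist v z == 1].

Definition Vside (x y : T) : {set T} := [set v | gdist v x < gdist v y].
Definition Vmid (x y : T) : {set T} := [set v | gdist v x == gdist v y].

Definition automorphism (phi : T -> T) :=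
  bijective phi /\ forall u v, e (phi u) (phi v) = e u v.

Definition reflection (x y : T) (phi : T -> T) :=
  [/\ automorphism phi, (forall u, phi (phi u) = u), phi x = y &
   [/\
      (forall u, u \in Vside x y -> phi u \in Vside y x /\ e u (phi u)),
      (forall u v, u \in Vside x y -> v \in Vside y x -> e u v -> v = phi u)
    & (forall v, v \in Vmid x y -> phi v = v)]].

Definition reflective := forall x y, e x y -> exists phi, reflection x y phi.

Definition induced_disconnected (S : {set T}) :=
  exists x y, [/\ x \in S, y \in S &
    ~~ connect (fun u v => [&& e u v, u \in S & v \in S]) x y].

End Graphs.

Definition cart_rel (A B : finType) (ea : rel A) (eb : rel B) : rel (A * B) :=
  fun p q => ((p.1 == q.1) && eb p.2 q.2) || (ea p.1 q.1 && (p.2 == q.2)).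

Definition is_cartesian_product (T : finType) (e : rel T) :=
  exists (A B : finType) (ea : rel A) (eb : rel B) (f : T -> A * B),
    [/\ simple_graph ea, simple_graph eb, 1 < #|A|, 1 < #|B| &
        bijective f /\ forall u v, e u v = cart_rel ea eb (f u) (f v)].

(* Main.v *)
Require Import Defs.
From Stdlib Require Import ClassicalEpsilon.
From mathcomp Require Import all_boot zify.

Set Implicit Arguments. Unset Strict Implicit. Unset Printing Implicit Defensive.

Section Walks.
Variables (T : finType) (e : rel T).
Hypothesis esym : symmetric e.
Hypothesis eirr : irreflexive e.
Hypothesis econ : connected_graph e.

Lemma walkP x y n :
  reflect (exists p : seq T, [/\ size p = n, path e x p & last x p = y])
          (walk_of_len e x y n).
Proof.
apply: (iffP existsP).
  by case=> p /andP[hp /eqP hl]; exists (val p); rewrite size_tuple.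
case=> p [hs hp hl]; have hs' : size p == n by rewrite hs.
by exists (Tuple hs'); rewrite /= hp hl eqxx.
Qed.

Lemma walk0 x y : walk_of_len e x y 0 -> x = y.
Proof. move/walkP=> [p [hs _ hl]]; by case: p hs hl => // _ _ <-. Qed.

Lemma walk0' x : walk_of_len e x x 0.
Proof. by apply/walkP; exists [::]. Qed.

Lemma walkS x w y n : e x w -> walk_of_len e w y n -> walk_of_len e x y n.+1.
Proof.
move=> hxw /walkP[p [hs hp hl]]; apply/walkP; exists (w :: p).
by rewrite /= hs hxw hp.
Qed.

Lemma walkSinv x y n : walk_of_len e x y n.+1 ->
  exists w, e x w /\ walk_of_len e w y n.
Proof.
move/walkP=> [p [hs hp hl]]; case: p hs hp hl => // w p [hs] /= /andP[hxw hp] hl.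
by exists w; split=> //; apply/walkP; exists p.
Qed.

Lemma walk_cat x y u m n : walk_of_len e x y m -> walk_of_len e y u n ->
  walk_of_len e x u (m + n).
Proof.
elim: m x => [|m IH] x.
  by move/walk0=> ->.
case/walkSinv=> w [hxw hw] hn; rewrite addSn; apply: walkS hxw _.
exact: IH.
Qed.

Lemma walk1 x y : e x y -> walk_of_len e x y 1.
Proof. by move=> h; apply: walkS h (walk0' _). Qed.

Lemma walk_sym x y n : walk_of_len e x y n -> walk_of_len e y x n.
Proof.
elim: n x => [|n IH] x.
  by move/walk0=> ->; apply: walk0'.
case/walkSinv=> w [hxw hw]; rewrite -addn1.
apply: walk_cat (IH _ hw) _; apply: walk1; by rewrite esym.
Qed.

Lemma gdist_le x y n : walk_of_len e x y n -> gdist e x y <= n.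
Proof.
move=> hw; rewrite /gdist.
case: (ltnP n #|T|) => hn; last first.
  by apply: leq_trans (find_size _ _) _; rewrite size_iota.
rewrite leqNgt; apply/negP=> /(before_find 0).
by rewrite nth_iota // add0n hw.
Qed.

Lemma walk_exists x y : exists2 n, n < #|T| & walk_of_len e x y n.
Proof.
have /connectP[p hp hl] := econ x y.
rewrite hl; case: (shortenP hp) => p' hp' hu _.
exists (size p').
  have := card_uniqP hu; rewrite /= => hc.
  by rewrite /= in hc; rewrite -hc max_card.
by apply/walkP; exists p'.
Qed.

Lemma gdist_walk x y : walk_of_len e x y (gdist e x y).
Proof.
have [n hn hw] := walk_exists x y.
have hhas : has (walk_of_len e x y) (iota 0 #|T|).
  by apply/hasP; exists n => //; rewrite mem_iota.
have := nth_find 0 hhas; rewrite /gdist nth_iota ?add0n //.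
by have := hhas; rewrite has_find size_iota.
Qed.

Lemma gdist0 x : gdist e x x = 0.
Proof. by apply/eqP; rewrite -leqn0; apply: gdist_le; apply: walk0'. Qed.

Lemma gdist_eq0 x y : gdist e x y = 0 -> x = y.
Proof. by move=> h; have := gdist_walk x y; rewrite h; apply: walk0. Qed.

Lemma gdist_sym x y : gdist e x y = gdist e y x.
Proof.
by apply/eqP; rewrite eqn_leq !gdist_le // walk_sym // gdist_walk.
Qed.

Lemma gdist_tri x y u : gdist e x u <= gdist e x y + gdist e y u.
Proof. by apply: gdist_le; apply: walk_cat; apply: gdist_walk. Qed.

Lemma gdist1 x y : e x y -> gdist e x y = 1.
Proof.
move=> h; apply/eqP; rewrite eqn_leq gdist_le ?walk1 //=.
rewrite lt0n; apply/negP=> /eqP /gdist_eq0 hxy.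
by rewrite hxy eirr in h.
Qed.

Lemma gdist1E x y : gdist e x y = 1 -> e x y.
Proof.
move=> h; have := gdist_walk x y; rewrite h.
by case/walkSinv=> w [hxw /walk0 <-].
Qed.

Lemma gdist_step x y : x != y -> exists w, e x w /\ (gdist e w y).+1 = gdist e x y.
Proof.
move=> hxy; have := gdist_walk x y.
case hd: (gdist e x y) => [|k].
  by move/walk0=> h; rewrite h eqxx in hxy.
case/walkSinv=> w [hxw hw]; exists w; split=> //.
have h1 := gdist_le hw; have h2 := gdist_tri x w y.
rewrite (gdist1 hxw) hd add1n in h2; apply/eqP; rewrite eqn_leq; apply/andP; split=> //.
Qed.

Lemma gdist_lip u a b : e a b -> gdist e u b <= (gdist e u a).+1.
Proof.
move=> h; apply: leq_trans (gdist_tri u a b) _; by rewrite (gdist1 h) addn1.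
Qed.

Lemma gdist_ge2 x y : x != y -> ~~ e x y -> 2 <= gdist e x y.
Proof.
move=> hxy hn; case hd: (gdist e x y) => [|[|k]] //.
  by move/gdist_eq0: hd => h; rewrite h eqxx in hxy.
by move/gdist1E: hd => h; rewrite h in hn.
Qed.

Lemma walk_map (f : T -> T) x y n : (forall u v, e (f u) (f v) = e u v) ->
  walk_of_len e x y n -> walk_of_len e (f x) (f y) n.
Proof.
move=> hf; elim: n x => [|n IH] x.
  by move/walk0=> ->; apply: walk0'.
case/walkSinv=> w [hxw hw]; apply: walkS (IH _ hw); by rewrite hf.
Qed.

Lemma gdist_inv (f : T -> T) : (forall u v, e (f u) (f v) = e u v) ->
  (forall u, f (f u) = u) -> forall x y, gdist e (f x) (f y) = gdist e x y.
Proof.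
move=> hf hi x y; apply/eqP; rewrite eqn_leq; apply/andP; split.
  apply: gdist_le; apply: (walk_map hf); exact: gdist_walk.
rewrite -{1}(hi x) -{1}(hi y); apply: gdist_le; apply: (walk_map hf); exact: gdist_walk.
Qed.


Notation d := (gdist e).

Lemma inVside u x y : (u \in Vside e x y) = (d u x < d u y).
Proof. by rewrite inE. Qed.
Lemma inVmid u x y : (u \in Vmid e x y) = (d u x == d u y).
Proof. by rewrite inE. Qed.

Section OneRefl.
Variables (x y : T) (r : T -> T).
Hypothesis hr : reflection e x y r.

Lemma r_inv u : r (r u) = u.
Proof. by case: hr. Qed.
Lemma r_edge u v : e (r u) (r v) = e u v.
Proof. by case: hr => -[]. Qed.
Lemma r_dist u v : d (r u) (r v) = d u v.
Proof. apply: gdist_inv => //; [exact: r_edge | exact: r_inv]. Qed.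
Lemma r_x : r x = y.
Proof. by case: hr. Qed.
Lemma r_y : r y = x.
Proof. by rewrite -r_x r_inv. Qed.
Lemma r_L u : d u x < d u y -> d (r u) y < d (r u) x /\ e u (r u).
Proof. by case: hr => _ _ _ [h _ _] hu; have [] := h u; rewrite ?inVside. Qed.
Lemma r_R u : d u y < d u x -> d (r u) x < d (r u) y /\ e u (r u).
Proof.
move=> hu; have hu' : d (r u) x < d (r u) y.
  by have := r_dist u y; have := r_dist u x; rewrite r_x r_y; lia.
split=> //; have [_ h] := r_L hu'; by rewrite esym r_inv in h.
Qed.
Lemma r_cross u v : d u x < d u y -> d v y < d v x -> e u v -> v = r u.
Proof. by case: hr => _ _ _ [_ h _] hu hv huv; apply: h; rewrite ?inVside. Qed.
Lemma r_fix u : d u x = d u y -> r u = u.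
Proof. by case: hr => _ _ _ [_ _ h] hu; apply: h; rewrite inVmid hu. Qed.
End OneRefl.

Lemma refl_uniq x y r1 r2 : reflection e x y r1 -> reflection e x y r2 ->
  forall u, r1 u = r2 u.
Proof.
move=> h1 h2.
have hL u : d u x < d u y -> r1 u = r2 u.
  move=> hu; have [h1a h1b] := r_L h1 hu; have [h2a h2b] := r_L h2 hu.
  by rewrite (r_cross h1 hu h2a h2b).
move=> u; case: (ltngtP (d u x) (d u y)) => hu.
- exact: hL.
- have [ha _] := r_R h1 hu.
  have h := hL _ ha; rewrite (r_inv h1) in h.
  by rewrite {2}h (r_inv h2).
- by rewrite (r_fix h1 hu) (r_fix h2 hu).
Qed.

Lemma refl_conj x y r g : reflection e x y r ->
  (forall u v, e (g u) (g v) = e u v) -> (forall u, g (g u) = u) ->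
  reflection e (g x) (g y) (fun u => g (r (g u))).
Proof.
move=> hr hge hgi.
have gd u v : d (g u) (g v) = d u v by apply: gdist_inv.
have gd' u v : d u (g v) = d (g u) v by rewrite -gd hgi.
split.
- split.
    by exists (fun u => g (r (g u))) => u; rewrite hgi (r_inv hr) hgi.
  by move=> u v; rewrite hge (r_edge hr) hge.
- by move=> u; rewrite hgi (r_inv hr) hgi.
- by rewrite hgi (r_x hr).
split.
- move=> u; rewrite !inVside !gd' => hu; have [h1 h2] := r_L hr hu.
  rewrite !hgi; split=> //; by rewrite -hge hgi.
- move=> u v; rewrite !inVside !gd' => hu hv huv.
  by rewrite -(r_cross hr hu hv) ?hgi // hge.
- move=> v; rewrite inVmid !gd' => /eqP hv.
  by rewrite (r_fix hr hv) hgi.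
Qed.

Lemma refl_transfer x y p q r r' :
  reflection e x y r -> reflection e p q r' -> e p q ->
  r p = q -> r' x = y -> d x p < d x q ->
  reflection e p q r /\ (forall u, d u x < d u y <-> d u p < d u q).
Proof.
move=> hr hr' hpq hrp hrx hx.
have rq : r q = p by rewrite -hrp (r_inv hr).
have hM u : d u x = d u y -> d u p = d u q.
  by move=> hu; have := r_dist hr u p; rewrite (r_fix hr hu) hrp.
have hM' u : d u p = d u q -> d u x = d u y.
  by move=> hu; have := r_dist hr' u x; rewrite (r_fix hr' hu) hrx.
have hL : forall k u, d u x = k -> d u x < d u y -> d u p < d u q.
  elim/ltn_ind=> k IH u hk hu.
  case: (eqVneq u x) => [->|hux]; first by [].
  have [u1 [hu1 hd1]] := gdist_step hux.
  have hu1L : d u1 x < d u1 y.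
    have h2 : d u y <= (d u1 y).+1.
      by rewrite gdist_sym (gdist_sym u1); apply: gdist_lip; rewrite esym.
    lia.
  have ih := IH _ _ u1 erefl hu1L; rewrite -hk -hd1 in ih.
  have {}ih := ih (ltnSn _).
  case: (ltngtP (d u p) (d u q)) => // h.
  - have := r_cross hr' ih h; rewrite esym => /(_ hu1) hu'.
    have : d u y = d u1 x by rewrite hu' -hrx (r_dist hr').
    lia.
  - by have := hM' _ h; lia.
have hR u : d u y < d u x -> d u q < d u p.
  move=> hu; have hu' : d (r u) x < d (r u) y.
    by have := r_dist hr u y; have := r_dist hr u x; rewrite (r_x hr) (r_y hr); lia.
  have := hL _ _ erefl hu'; have := r_dist hr u p; have := r_dist hr u q.
  rewrite hrp rq; lia.
have hE u : d u x < d u y <-> d u p < d u q.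
  split; first exact: hL _ _ erefl.
  move=> h; case: (ltngtP (d u x) (d u y)) => // h'.
    by have := hR _ h'; lia.
  by have := hM _ h'; lia.
split=> //.
split.
- by case: hr.
- exact: r_inv hr.
- exact: hrp.
split.
- move=> u; rewrite inVside => /hE hu; rewrite inVside.
  have [h1 h2] := r_L hr hu; split=> //.
  case: (ltngtP (d (r u) q) (d (r u) p)) => // h.
    by move/hE: h; lia.
  by have := hM' _ (sym_eq h); lia.
- move=> u v; rewrite !inVside => /hE hu hv huv.
  apply: (r_cross hr hu) huv.
  case: (ltngtP (d v y) (d v x)) => // h.
    by move/hE: h; lia.
  by have := hM _ (sym_eq h); lia.
- move=> v; rewrite inVmid => /eqP hv; apply: (r_fix hr); exact: hM'.
Qed.

Hypothesis hrefl : reflective e.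

Definition sr (x y : T) : T -> T :=
  epsilon (inhabits id) (fun phi => reflection e x y phi).

Lemma sr_refl x y : e x y -> reflection e x y (sr x y).
Proof. by move=> h; apply: epsilon_spec; apply: hrefl. Qed.

Variable z : T.
Notation s n := (sr z n).

Lemma s_edge n u v : e z n -> e (s n u) (s n v) = e u v.
Proof. by move=> h; exact: (r_edge (sr_refl h) u v). Qed.
Lemma s_inv n u : e z n -> s n (s n u) = u.
Proof. by move=> h; exact: (r_inv (sr_refl h) u). Qed.
Lemma s_dist n u v : e z n -> d (s n u) (s n v) = d u v.
Proof. by move=> h; exact: (r_dist (sr_refl h) u v). Qed.
Lemma s_z n : e z n -> s n z = n.
Proof. by move=> h; exact: (r_x (sr_refl h)). Qed.

Section Square.
Variables (c b : T).
Hypotheses (hc : e z c) (hb : e z b) (hcb : c != b) (hncb : ~~ e c b).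

Let w := s c b.

Lemma sq_facts : [/\ s b c = w, reflection e c w (s b) &
   forall u, d u z < d u b <-> d u c < d u w].
Proof.
have hrc := sr_refl hc; have hrb := sr_refl hb.
have dcb : 2 <= d c b by apply: gdist_ge2.
have dbz : d b z = 1 by rewrite gdist1 // esym.
have dcz : d c z = 1 by rewrite gdist1 // esym.
have hbL : d b z < d b c by rewrite dbz gdist_sym.
have [hwR hbw] := r_L hrc hbL.
rewrite -/w in hwR hbw.
have hcw : e c w by rewrite -(r_x hrc) /w (r_edge hrc).
have dwc : d w c = 1 by rewrite gdist1 // esym.
have dwb : d w b = 1 by rewrite gdist1 // esym.
have dwz : d w z = 2.
  have := gdist_tri w b z; rewrite dwb dbz => h1; lia.
have hcL : d c z < d c b by rewrite dcz.
have hwR' : d w b < d w z by rewrite dwb dwz.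
have hsbc : s b c = w by apply/sym_eq; apply: (r_cross hrb hcL hwR' hcw).
have hrcw := sr_refl hcw.
have hzL : d z c < d z w by rewrite gdist_sym dcz gdist_sym dwz.
have hbR : d b w < d b c by rewrite gdist_sym dwb gdist_sym.
have hzb : e z b := hb.
have hcwz : sr c w z = b by apply/sym_eq; apply: (r_cross hrcw hzL hbR hzb).
have [h1 h2] := refl_transfer hrb hrcw hcw hsbc hcwz hzL.
by split.
Qed.

Lemma sq_comm u : s c (s b u) = s b (s c u).
Proof.
have hrc := sr_refl hc; have hrb := sr_refl hb.
have [h1 h2 _] := sq_facts.
have hc' := refl_conj (g := s c) hrb (fun u v => s_edge u v hc) (fun u => s_inv u hc).
rewrite (r_x hrc) -/w in hc'.
have := refl_uniq hc' h2 (s c u); by rewrite (s_inv _ hc).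
Qed.

Lemma sq_pres u : d u z < d u b -> d (s c u) z < d (s c u) b.
Proof.
have [_ _ h] := sq_facts => hu.
apply/h; have := s_dist u z hc; have := s_dist u b hc; rewrite s_z // -/w; lia.
Qed.

End Square.
Variables (C D : {set T}).
Hypothesis hC : forall c, c \in C -> e z c.
Hypothesis hD : forall b, b \in D -> e z b.
Hypothesis hCD : forall c b, c \in C -> b \in D -> (c != b) && ~~ e c b.
Hypothesis hN : forall n, e z n -> (n \in C) || (n \in D).

Definition app (l : seq T) (u : T) : T := foldr (fun n v => s n v) u l.

Definition nbrs (l : seq T) := all (fun n => e z n) l.

Lemma app_cat l m u : app (l ++ m) u = app l (app m u).
Proof. by rewrite /app foldr_cat. Qed.

Lemma app_edge l u v : nbrs l -> e (app l u) (app l v) = e u v.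
Proof.
elim: l => [|n l IH] //= /andP[hn hl]; by rewrite s_edge // IH.
Qed.

Lemma app_dist l u v : nbrs l -> d (app l u) (app l v) = d u v.
Proof.
elim: l => [|n l IH] //= /andP[hn hl]; by rewrite s_dist // IH.
Qed.

Lemma nbrs_rev l : nbrs l -> nbrs (rev l).
Proof. by rewrite /nbrs all_rev. Qed.

Lemma app_revK l u : nbrs l -> app (rev l) (app l u) = u.
Proof.
elim: l u => [|n l IH] u //= /andP[hn hl].
by rewrite rev_cons -cats1 app_cat /= s_inv // IH.
Qed.

Lemma app_Krev l u : nbrs l -> app l (app (rev l) u) = u.
Proof.
move=> hl; have := @app_revK (rev l) u (nbrs_rev hl); by rewrite revK.
Qed.

Lemma nbrsC l : all (mem C) l -> nbrs l.
Proof. by move=> /allP h; apply/allP=> n /h; apply: hC. Qed.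
Lemma nbrsD l : all (mem D) l -> nbrs l.
Proof. by move=> /allP h; apply/allP=> n /h; apply: hD. Qed.

Lemma comm1 c m u : c \in C -> all (mem D) m -> s c (app m u) = app m (s c u).
Proof.
move=> hc; elim: m => [|b m IH] //= /andP[hb hm].
have /andP[h1 h2] := hCD hc hb.
by rewrite (sq_comm (hC hc) (hD hb) h1 h2) IH.
Qed.

Lemma comm l m u : all (mem C) l -> all (mem D) m -> app l (app m u) = app m (app l u).
Proof.
move=> hl hm; elim: l hl => [|c l IH] //= /andP[hc hl].
by rewrite IH // comm1.
Qed.

Definition Y := [set v | [forall b in D, d v z < d v b]].
Definition X := [set v | [forall c in C, d v z < d v c]].

Lemma Y_pres l v : all (mem C) l -> v \in Y -> app l v \in Y.
Proof.
elim: l => [|c l IH] //= /andP[hc hl] hv.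
have {}hv := IH hl hv; move: hv; rewrite !inE => /forallP hv.
apply/forallP=> b; apply/implyP=> hbD; have := hv b; rewrite hbD /= => h.
have /andP[h1 h2] := hCD hc hbD.
exact: (sq_pres (hC hc) (hD hbD) h1 h2 h).
Qed.

Lemma X_pres l v : all (mem D) l -> v \in X -> app l v \in X.
Proof.
elim: l => [|b l IH] //= /andP[hb hl] hv.
have {}hv := IH hl hv; move: hv; rewrite !inE => /forallP hv.
apply/forallP=> c; apply/implyP=> hcC; have := hv c; rewrite hcC /= => h.
have /andP[h1 h2] := hCD hcC hb.
apply: (sq_pres (hD hb) (hC hcC)) h; [by rewrite eq_sym | by rewrite esym].
Qed.

Lemma z_Y : z \in Y.
Proof. by rewrite inE; apply/forallP=> b; apply/implyP=> hb; rewrite gdist0 gdist1 ?hD. Qed.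
Lemma z_X : z \in X.
Proof. by rewrite inE; apply/forallP=> b; apply/implyP=> hb; rewrite gdist0 gdist1 ?hC. Qed.

Lemma XY v : v \in X -> v \in Y -> v = z.
Proof.
rewrite !inE => /forallP hx /forallP hy.
case: (eqVneq z v) => [//|hzv].
have [n [hn hd]] := gdist_step hzv.
have : d v n < d v z by rewrite gdist_sym (gdist_sym v z) -hd.
case/orP: (hN hn) => hn'.
  by have := hx n; rewrite hn' /=; lia.
by have := hy n; rewrite hn' /=; lia.
Qed.

Definition rep v (lm : seq T * seq T) :=
  [&& all (mem C) lm.1, all (mem D) lm.2 & v == app lm.1 (app lm.2 z)].

Lemma decomp v : exists lm, rep v lm.
Proof.
have step : forall u v, e v u -> (exists lm, rep v lm) -> exists lm, rep u lm.
  move=> u {}v hvu [[l m] /and3P[/= hl hm /eqP hv]].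
  have hnl := nbrsC hl; have hnm := nbrsD hm.
  pose n := app (rev m) (app (rev l) u).
  have hzn : e z n.
    rewrite /n -{1}(@app_revK m z hnm) (app_edge _ _ (nbrs_rev hnm)).
    by rewrite -{1}(@app_revK l (app m z) hnl) (app_edge _ _ (nbrs_rev hnl)) -hv.
  have hu : u = app l (app m (s n z)).
    by rewrite s_z // /n app_Krev // app_Krev.
  case/orP: (hN hzn) => hn.
    exists (l ++ [:: n], m); apply/and3P; split.
    - by rewrite all_cat hl /= hn.
    - exact: hm.
    - by rewrite app_cat /= comm1 // -hu.
  exists (l, m ++ [:: n]); apply/and3P; split=> //.
  - by rewrite all_cat hm /= hn.
  - by rewrite app_cat /= -hu.
have hz : exists lm, rep z lm by exists ([::], [::]); rewrite /rep /= eqxx.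
have /connectP[p hp ->] := econ z v.
elim: p z hp hz => [|x p IH] y //= /andP[hyx hp] hy.
apply: IH hp _; exact: step hyx hy.
Qed.
Lemma allC_rev l : all (mem C) l -> all (mem C) (rev l).
Proof. by rewrite all_rev. Qed.
Lemma allD_rev l : all (mem D) l -> all (mem D) (rev l).
Proof. by rewrite all_rev. Qed.

Lemma app_uniq l m l' m' : all (mem C) l -> all (mem D) m ->
  all (mem C) l' -> all (mem D) m' ->
  app l (app m z) = app l' (app m' z) -> app l z = app l' z /\ app m z = app m' z.
Proof.
move=> hl hm hl' hm' H.
have H1 : app (rev l') (app l (app m z)) = app m' z by rewrite H app_revK // nbrsC.
have hc : all (mem C) (rev l' ++ l) by rewrite all_cat allC_rev.
rewrite -app_cat comm // in H1.
have H2 : app (rev l' ++ l) z = app (rev m ++ m') z.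
  by rewrite [RHS]app_cat -H1 app_revK // nbrsD.
have hY : app (rev l' ++ l) z \in Y by apply: Y_pres => //; exact: z_Y.
have hX : app (rev l' ++ l) z \in X.
  by rewrite H2; apply: X_pres; [by rewrite all_cat allD_rev | exact: z_X].
have E := XY hX hY.
split.
  have := congr1 (app l') E; rewrite app_cat app_Krev ?nbrsC //.
by have := congr1 (app m) E; rewrite H2 app_cat app_Krev ?nbrsD.
Qed.

Lemma rearr l m l' m' : all (mem C) l -> all (mem D) m ->
  all (mem C) l' -> all (mem D) m' ->
  app l z = app l' z -> app m z = app m' z -> app l (app m z) = app l' (app m' z).
Proof.
move=> hl hm hl' hm' H1 H2.
by rewrite comm // H1 -comm // H2.
Qed.

Lemma Yrep y : y \in Y -> exists l, all (mem C) l && (y == app l z).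
Proof.
move=> hy; have [[l m] /and3P[/= hl hm /eqP hv]] := decomp y.
exists l; rewrite hl /=.
have h1 : app (rev l) y = app m z by rewrite hv app_revK // nbrsC.
have hX : app m z \in X by apply: X_pres => //; exact: z_X.
have hY : app m z \in Y by rewrite -h1; apply: Y_pres => //; exact: allC_rev.
by rewrite hv (XY hX hY).
Qed.

Lemma Xrep y : y \in X -> exists m, all (mem D) m && (y == app m z).
Proof.
move=> hy; have [[l m] /and3P[/= hl hm /eqP hv]] := decomp y.
exists m; rewrite hm /=.
have h1 : app (rev m) y = app l z by rewrite hv (@comm l m z hl hm) app_revK // nbrsD.
have hY : app l z \in Y by apply: Y_pres => //; exact: z_Y.
have hX : app l z \in X by rewrite -h1; apply: X_pres => //; exact: allD_rev.
by rewrite hv (@comm l m z hl hm) (XY hX hY).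
Qed.

Definition lmOf v := xchoose (decomp v).

Lemma lmOf_spec v : rep v (lmOf v).
Proof. exact: xchooseP. Qed.

Lemma fY_in v : app (lmOf v).1 z \in Y.
Proof. by have /and3P[h _ _] := lmOf_spec v; apply: Y_pres => //; exact: z_Y. Qed.
Lemma fX_in v : app (lmOf v).2 z \in X.
Proof. by have /and3P[_ h _] := lmOf_spec v; apply: X_pres => //; exact: z_X. Qed.

Definition TY := {y | y \in Y}.
Definition TX := {x | x \in X}.

Definition FY (v : T) : TY := @exist T (fun y => y \in Y) _ (fY_in v).
Definition FX (v : T) : TX := @exist T (fun y => y \in X) _ (fX_in v).
Definition F (v : T) : TY * TX := (FY v, FX v).

Definition lOf (y : TY) := xchoose (Yrep (valP y)).
Definition mOf (x : TX) := xchoose (Xrep (valP x)).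

Definition Hinv (p : TY * TX) : T := app (lOf p.1) (app (mOf p.2) z).

Lemma lOf_spec y : all (mem C) (lOf y) && (val y == app (lOf y) z).
Proof. exact: (xchooseP (Yrep (valP y))). Qed.
Lemma mOf_spec x : all (mem D) (mOf x) && (val x == app (mOf x) z).
Proof. exact: (xchooseP (Xrep (valP x))). Qed.

Lemma FH : cancel F Hinv.
Proof.
move=> v; rewrite /Hinv /=.
have /andP[hl /eqP el] := lOf_spec (FY v).
have /andP[hm /eqP em] := mOf_spec (FX v).
have /and3P[hl' hm' /eqP ev] := lmOf_spec v.
rewrite /= in el em.
apply: sym_eq; rewrite {1}ev; exact: rearr.
Qed.

Lemma HF : cancel Hinv F.
Proof.
move=> [y x]; rewrite /Hinv /=.
have /andP[hl /eqP el] := lOf_spec y.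
have /andP[hm /eqP em] := mOf_spec x.
set v := app _ _.
have /and3P[hl' hm' /eqP ev] := lmOf_spec v.
have [e1 e2] := app_uniq hl' hm' hl hm (sym_eq ev).
congr (_, _); apply: val_inj => /=.
  by rewrite e1 el.
by rewrite e2 em.
Qed.

Definition eY : rel TY := fun a b => e (val a) (val b).
Definition eX : rel TX := fun a b => e (val a) (val b).

Lemma F_edge u v : e u v = cart_rel eY eX (F u) (F v).
Proof.
have /and3P[hl hm /eqP eu] := lmOf_spec u.
have /and3P[hl' hm' /eqP ev] := lmOf_spec v.
rewrite /cart_rel /eY /eX /= -!val_eqE /=.
move: hl hm eu hl' hm' ev.
set l := (lmOf u).1; set m := (lmOf u).2; set l' := (lmOf v).1; set m' := (lmOf v).2.
move=> hl hm eu hl' hm' ev.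
have hnl := nbrsC hl; have hnm := nbrsD hm.
apply/idP/idP.
- move=> huv.
  pose n := app (rev m) (app (rev l) v).
  have hzn : e z n.
    rewrite /n -{1}(@app_revK m z hnm) (app_edge _ _ (nbrs_rev hnm)).
    by rewrite -{1}(@app_revK l (app m z) hnl) (app_edge _ _ (nbrs_rev hnl)) -eu.
  have hv : v = app l (app m (s n z)).
    by rewrite s_z // /n app_Krev // app_Krev.
  case/orP: (hN hzn) => hn.
  + have hv2 : v = app (l ++ [:: n]) (app m z) by rewrite app_cat /= comm1.
    have hc : all (mem C) (l ++ [:: n]) by rewrite all_cat hl /= hn.
    rewrite ev in hv2.
    have [e1 e2] := app_uniq hl' hm' hc hm hv2.
    apply/orP; right; apply/andP; split.
      by rewrite e1 app_cat /= s_z // app_edge.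
    by rewrite e2.
  + have hv2 : v = app l (app (m ++ [:: n]) z) by rewrite app_cat /=.
    have hd : all (mem D) (m ++ [:: n]) by rewrite all_cat hm /= hn.
    rewrite ev in hv2.
    have [e1 e2] := app_uniq hl' hm' hl hd hv2.
    apply/orP; left; apply/andP; split.
      by rewrite e1.
    by rewrite e2 app_cat /= s_z // app_edge.
- case/orP=> /andP[h1 h2].
  + move/eqP: h1 => h1.
    have ev2 : v = app l (app m' z) by rewrite ev; exact: rearr.
    by rewrite eu ev2 app_edge.
  + move/eqP: h2 => h2.
    have ev2 : v = app m (app l' z) by rewrite ev -(@comm l' m z) // h2.
    by rewrite eu (@comm l m z) // ev2 app_edge // nbrsD.
Qed.
Variables (a b : T).
Hypotheses (haC : a \in C) (hbD : b \in D).

Lemma main_CD : is_cartesian_product e.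
Proof.
have haY : a \in Y.
  rewrite inE; apply/forallP=> x; apply/implyP=> hx.
  have /andP[h1 h2] := hCD haC hx.
  have := gdist_ge2 h1 h2; rewrite (gdist_sym a z) (gdist1 (hC haC)); lia.
have hbX : b \in X.
  rewrite inE; apply/forallP=> x; apply/implyP=> hx.
  have /andP[h1 h2] := hCD hx hbD.
  have h1' : b != x by rewrite eq_sym.
  have h2' : ~~ e b x by rewrite esym.
  have := gdist_ge2 h1' h2'; rewrite (gdist_sym b z) (gdist1 (hD hbD)); lia.
have hza : z != a by apply/eqP=> h; have := hC haC; rewrite h eirr.
have hzb : z != b by apply/eqP=> h; have := hD hbD; rewrite h eirr.
exists TY, TX, eY, eX, F; split.
- by split; [move=> x y; rewrite /eY esym | move=> x; rewrite /eY eirr].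
- by split; [move=> x y; rewrite /eX esym | move=> x; rewrite /eX eirr].
- rewrite /TY card_sig; apply/card_gt1P; exists z, a; split; [exact: z_Y | exact: haY | exact: hza].
- rewrite /TX card_sig; apply/card_gt1P; exists z, b; split; [exact: z_X | exact: hbX | exact: hzb].
- split; first exact: (Bijective FH HF).
  exact: F_edge.
Qed.
End Walks.

Theorem lemma2p7 (T : finType) (e : rel T) (z : T) :
  simple_graph e -> connected_graph e -> reflective e ->
  induced_disconnected e (sphere1 e z) ->
  is_cartesian_product e.
Proof.
move=> [esym eirr] econ hrefl [a [b [haS hbS hnc]]].
set S := sphere1 e z in haS hbS hnc.
set er := (fun u v => [&& e u v, u \in S & v \in S]) in hnc.
have hS v : (v \in S) = e z v.
  rewrite /S /sphere1 inE; apply/eqP/idP.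
    by move/(gdist1E econ); rewrite esym.
  by move=> h; apply: (gdist1 eirr econ); rewrite esym.
clearbody S.
pose C := [set v | connect er a v && (v \in S)].
pose D := S :\: C.
have hCD c x : c \in C -> x \in D -> (c != x) && ~~ e c x.
  rewrite !inE => /andP[hac hcS] /andP[hxC hxS].
  apply/andP; split.
    by apply/eqP=> h; rewrite -h hac hcS in hxC.
  apply/negP=> hcx; move: hxC; rewrite hxS andbT.
  by rewrite (connect_trans hac (connect1 (_ : er c x))) //= /er hcx hcS hxS.
apply: (main_CD esym eirr econ hrefl (z:=z) (C:=C) (D:=D) _ _ hCD _ (a:=a) (b:=b)).
- by move=> c; rewrite inE -hS => /andP[].
- by move=> x; rewrite inE -hS => /andP[].
- move=> n hn; rewrite !inE hS hn /=.
  by case: (connect er a n).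
- by rewrite inE connect0 haS.
- by rewrite !inE hbS !andbT hnc.
Qed.
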